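(* Let $\alpha,\beta,\gamma$ be nonnegative real numbers with $\gamma\neq 0$, and put $r=\beta/\gamma$, $s=\alpha/\gamma$, $t=1/\gamma$. Let $(V_n)_{n\in\mathbb{Z}}$ be the generalized Tribonacci sequence with parameters $r,s,t$ (defined in the context). Let $x_{-1},x_0$ be nonzero real numbers with $(x_{-1},x_0)\notin F$, where $$F=\bigcup_{n=-1}^{\infty}\left\{(x_{-1},x_0):\ tV_n x_{-1}x_0+(V_{n+2}-rV_{n+1})x_0+V_{n+1}=0\right\},$$ and let $(x_n)_{n\ge -1}$ be the solution of $$x_{n+1}=\frac{\gamma}{x_n(x_{n-1}+\alpha)+\beta},\qquad n=0,1,2,\dots$$ with these initial values. Then for all $n=0,1,2,\dots$, $$x_n=\frac{tV_{n-1}x_{-1}x_0+(V_{n+1}-rV_n)x_0+V_n}{tV_nx_{-1}x_0+(V_{n+2}-rV_{n+1})x_0+V_{n+1}}.$$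
   Context: The generalized Tribonacci sequence with real parameters $r,s,t$ ($t\neq 0$) is defined by $V_0=0$, $V_1=1$, $V_2=r$ and $V_{n+3}=rV_{n+2}+sV_{n+1}+tV_n$ for $n\ge 0$, and is extended to negative indices by $V_{-n}=-\frac{s}{t}V_{-(n-1)}-\frac{r}{t}V_{-(n-2)}+\frac{1}{t}V_{-(n-3)}$ for $n=1,2,3,\dots$, so that the recurrence holds for all integers $n$ (in particular $V_{-1}=0$). *)

(* Defs.v *)
From Stdlib Require Import Reals ZArith Lra.
Open Scope R_scope.

(* Forward triple: tri r s t n = (V_n, V_{n+1}, V_{n+2}) for n >= 0. *)
Fixpoint tri (r s t : R) (n : nat) : R * R * R :=
  match n with
  | O => (0, 1, r)
  | S m => let '(a, b, c) := tri r s t m in (b, c, r * c + s * b + t * a)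
  end.

(* Backward triple: tri_back r s t n = (V_{-n}, V_{-n+1}, V_{-n+2}) for n >= 0,
   using V_{-n} = -(s/t) V_{-(n-1)} - (r/t) V_{-(n-2)} + (1/t) V_{-(n-3)}. *)
Fixpoint tri_back (r s t : R) (n : nat) : R * R * R :=
  match n with
  | O => (0, 1, r)
  | S m => let '(a, b, c) := tri_back r s t m in
           (- (s / t) * a - (r / t) * b + (1 / t) * c, a, b)
  end.

Definition V (r s t : R) (z : Z) : R :=
  match z with
  | Z0 => 0
  | Zpos p => fst (fst (tri r s t (Pos.to_nat p)))
  | Zneg p => fst (fst (tri_back r s t (Pos.to_nat p)))
  end.

(* Main.v *)
Require Import Defs.
From Stdlib Require Import Reals ZArith Lra Lia.
Open Scope R_scope.

Lemma V_nat r s t (k : nat) : V r s t (Z.of_nat k) = fst (fst (tri r s t k)).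
Proof. destruct k; [reflexivity|]. simpl. rewrite SuccNat2Pos.id_succ. reflexivity. Qed.

Lemma V_negnat r s t (k : nat) : V r s t (- Z.of_nat k) = fst (fst (tri_back r s t k)).
Proof. destruct k; [reflexivity|]. simpl. rewrite SuccNat2Pos.id_succ. reflexivity. Qed.

Lemma tri_eq r s t (k : nat) : tri r s t k =
  (V r s t (Z.of_nat k), V r s t (Z.of_nat k + 1), V r s t (Z.of_nat k + 2)).
Proof.
  induction k.
  - simpl. unfold V. simpl. reflexivity.
  - cbn [tri]. rewrite IHk. cbv beta iota.
    rewrite Nat2Z.inj_succ.
    replace (Z.succ (Z.of_nat k) + 1)%Z with (Z.of_nat k + 2)%Z by lia.
    replace (Z.succ (Z.of_nat k) + 2)%Z with (Z.of_nat (S (S (S k))))%Z by lia.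
    replace (Z.succ (Z.of_nat k))%Z with (Z.of_nat k + 1)%Z by lia.
    rewrite (V_nat r s t (S (S (S k)))). cbn [tri]. rewrite IHk. cbv beta iota. cbn [fst snd]. reflexivity.
Qed.

Lemma tri_back_eq r s t (k : nat) : tri_back r s t k =
  (V r s t (- Z.of_nat k), V r s t (- Z.of_nat k + 1), V r s t (- Z.of_nat k + 2)).
Proof.
  induction k.
  - simpl. unfold V. simpl. reflexivity.
  - simpl tri_back. rewrite IHk.
    assert (H := V_negnat r s t (S k)). simpl tri_back in H. rewrite IHk in H. simpl in H.
    rewrite <- H.
    replace (- Z.of_nat (S k) + 1)%Z with (- Z.of_nat k)%Z by lia.
    replace (- Z.of_nat (S k) + 2)%Z with (- Z.of_nat k + 1)%Z by lia.
    reflexivity.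
Qed.

Lemma V_rec r s t (n : Z) : t <> 0 ->
  V r s t (n + 3) = r * V r s t (n + 2) + s * V r s t (n + 1) + t * V r s t n.
Proof.
  intros Ht. destruct (Z_le_gt_dec 0 n) as [Hn|Hn].
  - destruct (Z_of_nat_complete n Hn) as [k ->].
    assert (H := tri_eq r s t (S k)). cbn [tri] in H. rewrite tri_eq in H.
    cbv beta iota in H. cbn [fst snd] in H.
    assert (H3 := f_equal snd H). cbn [snd] in H3.
    replace (Z.of_nat k + 3)%Z with (Z.of_nat (S k) + 2)%Z by lia.
    rewrite <- H3. ring.
  - assert (Hk : (0 <= - n - 1)%Z) by lia.
    destruct (Z_of_nat_complete _ Hk) as [k Hk'].
    assert (H := tri_back_eq r s t (S k)). cbn [tri_back] in H. rewrite tri_back_eq in H.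
    cbv beta iota in H.
    assert (H3 := f_equal (fun p => fst (fst p)) H). cbv beta in H3. cbn [fst snd] in H3.
    replace (- Z.of_nat (S k))%Z with n in H3 by lia.
    replace (- Z.of_nat k)%Z with (n + 1)%Z in H3 by lia.
    replace (- Z.of_nat k + 1)%Z with (n + 2)%Z in H3 by lia.
    replace (- Z.of_nat k + 2)%Z with (n + 3)%Z in H3 by lia.
    replace (n + 1 + 1)%Z with (n + 2)%Z in H3 by lia. replace (n + 1 + 2)%Z with (n + 3)%Z in H3 by lia. rewrite <- H3. field. exact Ht.
Qed.

Theorem mainTheorem1 (alpha beta gamma : R) (x : Z -> R) :
  0 <= alpha -> 0 <= beta -> 0 <= gamma -> gamma <> 0 ->
  let r := beta / gamma in
  let s := alpha / gamma in
  let t := 1 / gamma in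
  x (-1)%Z <> 0 -> x 0%Z <> 0 ->
  (* (x_{-1}, x_0) not in F *)
  (forall n : Z, (-1 <= n)%Z ->
     t * V r s t n * x (-1)%Z * x 0%Z
     + (V r s t (n + 2) - r * V r s t (n + 1)) * x 0%Z
     + V r s t (n + 1) <> 0) ->
  (* x is the solution of the difference equation *)
  (forall n : Z, (0 <= n)%Z ->
     x (n + 1)%Z = gamma / (x n * (x (n - 1)%Z + alpha) + beta)) ->
  forall n : Z, (0 <= n)%Z ->
    x n =
      (t * V r s t (n - 1) * x (-1)%Z * x 0%Z
       + (V r s t (n + 1) - r * V r s t n) * x 0%Z + V r s t n)
      / (t * V r s t n * x (-1)%Z * x 0%Z
         + (V r s t (n + 2) - r * V r s t (n + 1)) * x 0%Z
         + V r s t (n + 1)).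
Proof.
  intros Ha Hb Hg Hg0 r s t Hx1 Hx0 HF Hrec.
  assert (Ht : t <> 0) by (unfold t; unfold Rdiv; rewrite Rmult_1_l; apply Rinv_neq_0_compat; exact Hg0).
  pose (D := fun m => t * V r s t m * x (-1)%Z * x 0%Z
     + (V r s t (m + 2) - r * V r s t (m + 1)) * x 0%Z + V r s t (m + 1)).
  assert (HD : forall m, (-1 <= m)%Z -> D m <> 0) by exact HF.
  assert (DR : forall m, D (m + 3)%Z = r * D (m + 2)%Z + s * D (m + 1)%Z + t * D m).
  { intro m. unfold D. rewrite <- !Z.add_assoc.
    change (3 + 2)%Z with 5%Z. change (3 + 1)%Z with 4%Z.
    change (2 + 2)%Z with 4%Z. change (2 + 1)%Z with 3%Z.
    change (1 + 2)%Z with 3%Z. change (1 + 1)%Z with 2%Z.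
    assert (e3 := V_rec r s t m Ht).
    assert (e4 := V_rec r s t (m + 1) Ht).
    assert (e5 := V_rec r s t (m + 2) Ht).
    rewrite <- !Z.add_assoc in e4, e5.
    change (1 + 3)%Z with 4%Z in e4. change (1 + 2)%Z with 3%Z in e4.
    change (1 + 1)%Z with 2%Z in e4.
    change (2 + 3)%Z with 5%Z in e5. change (2 + 2)%Z with 4%Z in e5.
    change (2 + 1)%Z with 3%Z in e5.
    rewrite e5. rewrite !e4. rewrite !e3. ring. }
  assert (Dm2 : D (-2)%Z = x (-1)%Z * x 0%Z).
  { unfold D, V. simpl. field. exact Ht. }
  assert (Dm1 : D (-1)%Z = x 0%Z).
  { unfold D, V. simpl. field; exact Ht. }
  assert (D0 : D 0%Z = 1).
  { unfold D, V. simpl. ring. }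
  assert (Main : forall n, (0 <= n)%Z ->
     x (n - 1)%Z = D (n - 2)%Z / D (n - 1)%Z /\ x n = D (n - 1)%Z / D n).
  { apply natlike_ind.
    - simpl. rewrite Dm2, Dm1, D0. split; field; auto.
    - intros k Hk [IH1 IH2]. split.
      + replace (Z.succ k - 1)%Z with k by lia.
        replace (Z.succ k - 2)%Z with (k - 1)%Z by lia. exact IH2.
      + replace (Z.succ k - 1)%Z with k by lia.
        replace (Z.succ k) with (k + 1)%Z by lia.
        rewrite (Hrec k Hk), IH1, IH2.
        assert (E := DR (k - 2)%Z).
        replace (k - 2 + 3)%Z with (k + 1)%Z in E by lia.
        replace (k - 2 + 2)%Z with k in E by lia.
        replace (k - 2 + 1)%Z with (k - 1)%Z in E by lia.
        assert (N1 := HD (k - 1)%Z ltac:(lia)).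
        assert (N2 := HD k ltac:(lia)).
        assert (N3 := HD (k + 1)%Z ltac:(lia)).
        rewrite E in N3 |- *.
        unfold r, s, t in *.
        field. repeat split; auto.
        intro H0; apply N3.
        replace (beta / gamma * D k + alpha / gamma * D (k - 1)%Z + 1 / gamma * D (k - 2)%Z)
          with ((beta * D k + alpha * D (k - 1)%Z + D (k - 2)%Z) / gamma) by (field; exact Hg0).
        rewrite H0. unfold Rdiv. ring. }
  intros n Hn. destruct (Main n Hn) as [_ M]. rewrite M. unfold D.
  replace (n - 1 + 2)%Z with (n + 1)%Z by lia.
  replace (n - 1 + 1)%Z with n by lia. reflexivity.
Qed.
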